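(* For all integers $d\ge2$ and $k\ge1$, if $T$ is chosen uniformly at random from $\mathcal{C}_k^{(d)}$, then the probability that at least $d-1$ of the $d$ children of the root of $T$ are leaves is at least $1/e$.
   Context: A $d$-Catalan tree is a rooted planar tree in which each vertex has $0$ or $d$ children; $\mathcal{C}_k^{(d)}$ is the set of such trees with $k$ internal (non-leaf) vertices. *)

(* Defs.v *)
From Stdlib Require Import Reals Arith List Bool.
Import ListNotations.
Open Scope bool_scope.

(** Rooted planar (ordered) trees: a vertex with its ordered list of children. *)
Inductive tree : Type := Node : list tree -> tree.

Definition is_leaf (t : tree) : bool :=
  match t with Node [] => true | _ => false end.

Fixpoint internal (t : tree) : nat :=
  match t with
  | Node [] => 0
  | Node l => 1 + (fix sum (l : list tree) : nat :=
                     match l with [] => 0 | c :: r => internal c + sum r end) l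
  end.

Fixpoint is_dcatalan (d : nat) (t : tree) : bool :=
  match t with
  | Node l => ((length l =? 0) || (length l =? d)) &&
              (fix all (l : list tree) : bool :=
                 match l with [] => true | c :: r => is_dcatalan d c && all r end) l
  end.

Definition in_C (d k : nat) (t : tree) : Prop :=
  is_dcatalan d t = true /\ internal t = k.

Definition root_good (d : nat) (t : tree) : bool :=
  match t with Node l => d - 1 <=? length (filter is_leaf l) end.

(* Main.v *)
Require Import Defs.
From Stdlib Require Import Reals Arith List Lia Lra Psatz Permutation Bool.
Import ListNotations.
Definition leaf := Node [].
Definition suml (l : list tree) : nat := fold_right (fun c acc => internal c + acc)%nat 0%nat l.

Lemma internal_Node l : internal (Node l) = match l with [] => 0%nat | _ => S (suml l) end.
Proof. destruct l as [|c r]; [reflexivity|]. simpl. f_equal. Qed.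

Lemma dcat_Node d l : is_dcatalan d (Node l) =
  ((length l =? 0) || (length l =? d)) && forallb (is_dcatalan d) l.
Proof. reflexivity. Qed.

Lemma suml_app l1 l2 : suml (l1 ++ l2) = (suml l1 + suml l2)%nat.
Proof. induction l1; simpl; lia. Qed.

Definition forest d K m f := length f = m /\ forallb (is_dcatalan d) f = true /\ suml f = K.

Fixpoint F (d K : nat) : nat -> list (list tree) :=
  match K with
  | 0 => fun m => [repeat leaf m]
  | S K' => fix G m := match m with
            | 0 => []
            | S m' => map (cons leaf) (G m') ++
                      map (fun f => Node (firstn d f) :: skipn d f) (F d K' (m' + d))
            end
  end.

Fixpoint Nc (d K : nat) : nat -> nat :=
  match K with
  | 0 => fun m => 1%nat
  | S K' => fix G m := match m with
            | 0 => 0%nat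
            | S m' => (G m' + Nc d K' (m' + d))%nat
            end
  end.

Lemma F_S d K m : F d (S K) (S m) = map (cons leaf) (F d (S K) m) ++
  map (fun f => Node (firstn d f) :: skipn d f) (F d K (m + d)).
Proof. reflexivity. Qed.
Lemma Nc_S d K m : Nc d (S K) (S m) = (Nc d (S K) m + Nc d K (m + d))%nat.
Proof. reflexivity. Qed.

Lemma F_len d K m : length (F d K m) = Nc d K m.
Proof. revert m; induction K; intro m; [reflexivity|].
  induction m; [reflexivity|]. change (length (map (cons leaf) (F d (S K) m) ++ map (fun f => Node (firstn d f) :: skipn d f) (F d K (m + d))) = Nc d (S K) m + Nc d K (m+d))%nat. rewrite length_app, !length_map, IHm, IHK. reflexivity. Qed.

Lemma internal0_leaf t : internal t = 0%nat -> t = leaf.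
Proof. destruct t as [l]; rewrite internal_Node; destruct l; [reflexivity|discriminate]. Qed.

Lemma suml0 f : suml f = 0%nat -> f = repeat leaf (length f).
Proof. induction f; simpl; intros; [reflexivity|]. f_equal.
  - apply internal0_leaf; lia.
  - apply IHf; lia. Qed.

Lemma forallb_firstn {A} p n (l : list A) : forallb p l = true -> forallb p (firstn n l) = true.
Proof. intro H; rewrite <- (firstn_skipn n l), forallb_app in H; apply andb_prop in H; tauto. Qed.
Lemma forallb_skipn {A} p n (l : list A) : forallb p l = true -> forallb p (skipn n l) = true.
Proof. intro H; rewrite <- (firstn_skipn n l), forallb_app in H; apply andb_prop in H; tauto. Qed.

Lemma firstn_len_app {A} (l f : list A) : firstn (length l) (l ++ f) = l.
Proof. induction l; simpl; congruence. Qed.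
Lemma skipn_len_app {A} (l f : list A) : skipn (length l) (l ++ f) = f.
Proof. induction l; simpl; congruence. Qed.

Lemma F_spec d K m f : (1 <= d)%nat -> (In f (F d K m) <-> forest d K m f).
Proof.
  intro hd. revert m f; induction K; intros m f.
  - simpl. split.
    + intros [<-|[]]. unfold forest. rewrite repeat_length. split; [reflexivity|].
      induction m; simpl; [auto|]. destruct IHm as [-> ->]. auto.
    + intros [Hl [_ Hs]]. left. rewrite (suml0 f Hs), Hl. reflexivity.
  - revert f; induction m; intro f.
    + simpl. split; [tauto|]. intros [Hl [_ Hs]]. destruct f; simpl in *; lia.
    + rewrite F_S. rewrite in_app_iff, !in_map_iff. split.
      * intros [[f' [<- Hf']]|[f' [<- Hf']]].
        -- apply IHm in Hf'. destruct Hf' as [Hl [Hb Hs]]. unfold forest; simpl. rewrite Hl, Hb, Hs. auto.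
        -- apply IHK in Hf'. destruct Hf' as [Hl [Hb Hs]].
           assert (Hfl : length (firstn d f') = d) by (rewrite length_firstn; lia).
           unfold forest; cbn [length forallb suml fold_right]. fold (suml (skipn d f')). rewrite length_skipn, dcat_Node, Hfl, forallb_firstn, forallb_skipn by auto.
           rewrite Nat.eqb_refl, orb_true_r. split; [lia|split; [reflexivity|]].
           rewrite internal_Node. destruct (firstn d f') eqn:E; [simpl in Hfl; lia|].
           rewrite <- E. rewrite <- (firstn_skipn d f'), suml_app in Hs. lia.
      * intros [Hl [Hb Hs]]. destruct f as [|t f]; [discriminate|].
        simpl in Hl, Hb, Hs. apply andb_prop in Hb as [Ht Hb].
        destruct t as [l]. destruct l as [|c r].
        -- left. exists f. split; [reflexivity|]. apply IHm. unfold forest. rewrite Hb. split; [lia|split; auto].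
        -- right. rewrite dcat_Node in Ht. apply andb_prop in Ht as [Hlen Hcr].
           simpl length in Hlen. apply orb_prop in Hlen as [Hlen|Hlen]; [discriminate|].
           apply Nat.eqb_eq in Hlen.
           exists ((c :: r) ++ f). split.
           ++ rewrite <- Hlen. change (S (length r)) with (length (c :: r)).
              rewrite firstn_len_app, skipn_len_app. reflexivity.
           ++ apply IHK. unfold forest. rewrite length_app, forallb_app, Hcr, Hb, suml_app.
              rewrite internal_Node in Hs. simpl length in *; split; [lia|split; [reflexivity|]]. simpl in Hs. fold (suml r) in Hs. fold (suml f) in Hs. simpl suml. lia.
Qed.

Lemma F_NoDup d K m : (1 <= d)%nat -> NoDup (F d K m).
Proof.
  intro hd. revert m; induction K; intro m.
  - simpl. constructor; [tauto|constructor].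
  - induction m; [constructor|]. rewrite F_S. apply NoDup_app.
    + apply FinFun.Injective_map_NoDup; auto. intros x y H; injection H; auto.
    + apply FinFun.Injective_map_NoDup; auto. intros x y H; injection H; intros H1 H2.
      rewrite <- (firstn_skipn d x), <- (firstn_skipn d y), H1, H2. reflexivity.
    + intros a Ha Hb. apply in_map_iff in Ha as [x [<- _]]. apply in_map_iff in Hb as [y [Hy Hy']].
      apply F_spec in Hy' as [Hl _]; auto. injection Hy; intros _ H.
      destruct y as [|z y]; simpl in Hl; [lia|]. destruct d; [lia|]. discriminate.
Qed.

Lemma count_false {A} (p : A -> bool) l : (forall x, In x l -> p x = false) -> length (filter p l) = 0%nat.
Proof. induction l; simpl; auto. intro H. rewrite H by auto. apply IHl; auto. Qed.

Lemma length_filter_map {A B} (p : B -> bool) (h : A -> B) l :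
  length (filter p (map h l)) = length (filter (fun x => p (h x)) l).
Proof. induction l; simpl; auto. destruct (p (h a)); simpl; auto. Qed.

Lemma forallb_repeat {A} p (x : A) n : p x = true -> forallb p (repeat x n) = true.
Proof. intro; induction n; simpl; auto. rewrite H, IHn; auto. Qed.

Lemma suml_leaves f : forallb is_leaf f = true -> suml f = 0%nat.
Proof. induction f; simpl; auto. intro H; apply andb_prop in H as [H1 H2].
  destruct a as [[|c r]]; [|discriminate]. rewrite IHf; auto. Qed.

Lemma alleaf_count d K j m : (1 <= d)%nat ->
  length (filter (fun f => forallb is_leaf (skipn j f)) (F d K (j + m))) = Nc d K j.
Proof.
  intro hd. revert j; induction K; intro j.
  - simpl. rewrite forallb_skipn; [reflexivity|]. apply forallb_repeat. reflexivity.
  - induction j.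
    + simpl plus. apply count_false. intros f Hf. apply F_spec in Hf as [_ [_ Hs]]; auto.
      rewrite skipn_O. destruct (forallb is_leaf f) eqn:E; auto. rewrite suml_leaves in Hs; auto; lia.
    + simpl plus. rewrite F_S, Nc_S, filter_app, length_app, !length_filter_map. cbn [skipn].
      rewrite IHj. f_equal.
      rewrite (filter_ext _ (fun f => forallb is_leaf (skipn (j + d) f))).
      * replace (j + m + d)%nat with (j + d + m)%nat by lia. apply IHK.
      * intro a. rewrite skipn_skipn. now rewrite Nat.add_comm.
Qed.

Definition goodp m (f : list tree) := (m - 1 <=? length (filter is_leaf f))%nat.

Lemma len_le_filter {A} (p : A -> bool) l : (length l <=? length (filter p l))%nat = forallb p l.
Proof. induction l; simpl; auto. destruct (p a); simpl; auto.
  change ((S (length l) <=? length (filter p l)) = false)%nat. apply Nat.leb_gt. pose proof (filter_length_le p l). lia. Qed.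

Lemma good_count d K m : (1 <= d)%nat ->
  length (filter (goodp m) (F d (S K) m)) = (m * Nc d K d)%nat.
Proof.
  intro hd. induction m; [reflexivity|].
  rewrite F_S, filter_app, length_app, !length_filter_map.
  rewrite (filter_ext _ (goodp m)), IHm.
  2:{ intro a. unfold goodp. simpl. apply Bool.eq_iff_eq_true. rewrite !Nat.leb_le. lia. }
  rewrite (filter_ext_in _ (fun f => forallb is_leaf (skipn d f))).
  - rewrite (Nat.add_comm m d). rewrite alleaf_count; auto. simpl. lia.
  - intros a Ha. apply F_spec in Ha as [Hl _]; auto. unfold goodp. simpl.
    destruct (firstn d a) eqn:E. { apply (f_equal (@length _)) in E. rewrite length_firstn in E. simpl in E. lia. }
    simpl. rewrite <- len_le_filter, length_skipn. f_equal. lia.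
Qed.

Definition Tlist d k := map Node (F d (k - 1) d).

Lemma Tlist_spec d k t : (2 <= d)%nat -> (1 <= k)%nat -> (In t (Tlist d k) <-> in_C d k t).
Proof.
  intros hd hk. unfold Tlist, in_C. rewrite in_map_iff. split.
  - intros [l [<- Hl]]. apply F_spec in Hl as [Hl [Hb Hs]]; [|lia].
    rewrite dcat_Node, Hl, Nat.eqb_refl, orb_true_r, Hb, internal_Node. split; auto.
    destruct l; simpl in Hl; lia.
  - intros [Hb Hs]. destruct t as [l]. exists l. split; auto. apply F_spec; [lia|].
    rewrite dcat_Node in Hb. apply andb_prop in Hb as [H1 H2]. rewrite internal_Node in Hs.
    destruct l as [|c r]; [lia|]. apply orb_prop in H1 as [H1|H1]; [discriminate|].
    apply Nat.eqb_eq in H1. split; auto. split; auto. lia.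
Qed.

Lemma Tlist_NoDup d k : (1 <= d)%nat -> NoDup (Tlist d k).
Proof. intro. apply FinFun.Injective_map_NoDup; [intros x y Hxy; injection Hxy; auto|]. apply F_NoDup; auto. Qed.

Lemma same_len {A} (p : A -> bool) s T : NoDup s -> NoDup T -> (forall x, In x s <-> In x T) ->
  length s = length T /\ length (filter p s) = length (filter p T).
Proof. intros H1 H2 H3. split.
  - apply Permutation_length, NoDup_Permutation; auto.
  - apply Permutation_length, NoDup_Permutation; try apply NoDup_filter; auto.
    intro x. rewrite !filter_In, H3. tauto. Qed.

Fixpoint binom n k := match n, k with
  | _, 0 => 1%nat | 0, S _ => 0%nat | S n', S k' => (binom n' k' + binom n' k)%nat end.

Lemma binom_S n k : binom (S n) (S k) = (binom n k + binom n (S k))%nat.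
Proof. reflexivity. Qed.
Lemma binom_0 n : binom n 0 = 1%nat.
Proof. destruct n; reflexivity. Qed.

Lemma absorb n k : (S k * binom (S n) (S k) = S n * binom n k)%nat.
Proof.
  revert k; induction n; intro k.
  - destruct k; simpl; lia.
  - destruct k.
    + rewrite binom_S, !binom_0. specialize (IHn 0%nat). rewrite binom_0 in IHn. lia.
    + rewrite binom_S. pose proof (IHn k) as H1. pose proof (IHn (S k)) as H2. pose proof (binom_S n k) as H3. set (u := binom (S n) (S k)) in *. set (v := binom (S n) (S (S k))) in *. set (w := binom n k) in *. set (x := binom n (S k)) in *. clearbody u v w x. nia.
Qed.

Lemma closed d K m : (2 <= d)%nat -> ((d * K + m) * Nc d K m = m * binom (d * K + m) K)%nat.
Proof.
  intro hd. revert m; induction K; intro m.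
  - simpl. rewrite binom_0. lia.
  - induction m.
    + simpl. lia.
    + rewrite Nc_S. set (D := (d * S K + m)%nat).
      replace (d * S K + S m)%nat with (S D) by (unfold D; lia).
      rewrite binom_S. pose proof (absorb D K) as Ha. rewrite binom_S in Ha.
      pose proof (IHK (m + d)%nat) as Hz. replace (d * K + (m + d))%nat with D in Hz by (unfold D; lia).
      fold D in IHm.
      set (y := Nc d (S K) m) in *. set (z := Nc d K (m + d)) in *.
      set (a := binom D (S K)) in *. set (b := binom D K) in *.
      assert (HD : (D = d * K + d + m)%nat) by (unfold D; lia).
      clearbody D y z a b.
      apply (Nat.mul_cancel_l _ _ D); [lia|]. nia.
Qed.


Lemma ratio d K m : (2 <= d)%nat ->
  ((d - 1) * m * Nc d K (S m) <= d * S m * Nc d K m)%nat.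
Proof.
  intro hd. destruct K as [|K'].
  - simpl. nia.
  - pose proof (closed d (S K') m hd) as H1. pose proof (closed d (S K') (S m) hd) as H2.
    set (D := (d * S K' + m)%nat) in *.
    replace (d * S K' + S m)%nat with (S D) in H2 by (unfold D; lia).
    pose proof (absorb D K') as H3. pose proof (binom_S D K') as H4.
    set (A := Nc d (S K') m) in *. set (B := Nc d (S K') (S m)) in *.
    set (c := binom D (S K')) in *. set (c' := binom (S D) (S K')) in *. set (e := binom D K') in *.
    assert (HD : (D = d * S K' + m)%nat) by reflexivity.
    clearbody D A B c c' e.
    set (E := (D + 1 - S K')%nat).
    assert (HE : (E + S K' = S D)%nat) by (unfold E; nia).
    clearbody E.
    assert (H5 : (E * c' = S D * c)%nat).
    { assert (T1 : (S D * c' = E * c' + S K' * c')%nat) by (rewrite <- HE; ring).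
      rewrite H3, H4 in T1. rewrite H4. lia. }
    assert (H6 : (S D * (m * E * B) = S D * (S m * D * A))%nat).
    { transitivity (m * E * (S D * B))%nat; [ring|]. rewrite H2.
      transitivity (m * S m * (E * c'))%nat; [ring|]. rewrite H5.
      transitivity (S m * S D * (D * A))%nat; [|ring]. rewrite H1. ring. }
    apply Nat.mul_cancel_l in H6; [|lia].
    assert (H7 : ((d - 1) * D <= d * E)%nat) by nia.
    apply (Nat.mul_le_mono_pos_l _ _ E); [nia|].
    transitivity ((d - 1) * (m * E * B))%nat; [apply Nat.eq_le_incl; ring|].
    rewrite H6.
    transitivity (S m * A * ((d - 1) * D))%nat; [apply Nat.eq_le_incl; ring|].
    transitivity (S m * A * (d * E))%nat; [apply Nat.mul_le_mono_l; auto|].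
    apply Nat.eq_le_incl; ring.
Qed.

Lemma chain d K j : (2 <= d)%nat ->
  ((d - 1) ^ j * Nc d K (S j) <= d ^ j * S j * Nc d K 1)%nat.
Proof.
  intro hd. induction j.
  - simpl. lia.
  - pose proof (ratio d K (S j) hd) as R.
    apply (Nat.mul_le_mono_pos_l _ _ (S j)); [lia|].
    set (P := ((d-1) ^ j)%nat) in *. set (Q := (d ^ j)%nat) in *.
    change ((d - 1) ^ S j)%nat with ((d - 1) * P)%nat. change (d ^ S j)%nat with (d * Q)%nat.
    set (X := Nc d K (S (S j))) in *. set (Y := Nc d K (S j)) in *. set (Z := Nc d K 1) in *.
    clearbody P Q X Y Z.
    assert (H : (P * ((d - 1) * S j * X) <= P * (d * S (S j) * Y))%nat) by (apply Nat.mul_le_mono_l; auto).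
    assert (H' : (d * S (S j) * (P * Y) <= d * S (S j) * (Q * S j * Z))%nat) by (apply Nat.mul_le_mono_l; auto).
    transitivity (P * ((d - 1) * S j * X))%nat; [apply Nat.eq_le_incl; ring|].
    eapply Nat.le_trans; [exact H|].
    transitivity (d * S (S j) * (P * Y))%nat; [apply Nat.eq_le_incl; ring|].
    eapply Nat.le_trans; [exact H'|].
    apply Nat.eq_le_incl; ring.
Qed.

Lemma Nc_pos d K m : (2 <= d)%nat -> (0 < Nc d K (S m))%nat.
Proof. intro hd. revert m; induction K; intro m; [simpl; lia|].
  rewrite Nc_S. replace (m + d)%nat with (S (m + d - 1)) by lia. specialize (IHK (m + d - 1)%nat). lia. Qed.
Open Scope R_scope.

Lemma exp_pow_n x n : exp x ^ n = exp (INR n * x).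
Proof. induction n.
  - simpl. rewrite Rmult_0_l, exp_0. reflexivity.
  - rewrite S_INR. simpl. rewrite IHn, <- exp_plus. f_equal. ring. Qed.

Lemma e_bound n : (1 <= n)%nat -> INR (S n) ^ n <= exp 1 * INR n ^ n.
Proof.
  intro hn. assert (Hp : 0 < INR n) by (apply lt_0_INR; lia).
  replace (INR (S n)) with (INR n * (1 + / INR n)) by (rewrite S_INR; field; lra).
  rewrite Rpow_mult_distr, Rmult_comm. apply Rmult_le_compat_r; [apply pow_le; lra|].
  replace (exp 1) with (exp (/ INR n) ^ n) by (rewrite exp_pow_n; f_equal; field; lra).
  apply pow_incr. split.
  - pose proof (Rinv_0_lt_compat _ Hp). lra.
  - apply exp_ineq1_le.
Qed.

Lemma filter_leaf_repeat n : filter is_leaf (repeat leaf n) = repeat leaf n.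
Proof. induction n; simpl; congruence. Qed.


Theorem lemma5p2 (d k : nat) (hd : (2 <= d)%nat) (hk : (1 <= k)%nat) :
  (exists s : list tree, NoDup s /\ forall t, In t s <-> in_C d k t) /\
  (forall s : list tree, NoDup s -> (forall t, In t s <-> in_C d k t) ->
     / exp 1 <= INR (length (filter (root_good d) s)) / INR (length s)).
Proof.
  split.
  - exists (Tlist d k). split; [apply Tlist_NoDup; lia|]. intro t. apply Tlist_spec; auto.
  - intros s Hs Hm.
    destruct (same_len (root_good d) s (Tlist d k) Hs (Tlist_NoDup d k ltac:(lia))) as [L1 L2].
    { intro t. rewrite Hm, Tlist_spec; auto. tauto. }
    rewrite L1, L2. unfold Tlist. rewrite length_filter_map, length_map, F_len.
    change (fun x => root_good d (Node x)) with (goodp d).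
    destruct k as [|[|K]]; [lia| |].
    + simpl (1 - 1)%nat. simpl F. simpl Nc. unfold goodp. simpl filter.
      rewrite filter_leaf_repeat, repeat_length.
      replace ((d - 1 <=? d)%nat) with true by (symmetry; apply Nat.leb_le; lia).
      simpl length. rewrite Rdiv_1_r. simpl INR.
      rewrite <- Rinv_1. apply Rinv_le_contravar; [lra|]. 
      pose proof (exp_ineq1_le 1). rewrite Rinv_1. lra.
    + replace (S (S K) - 1)%nat with (S K) by lia. rewrite good_count by lia.
      pose proof (chain d (S K) (d - 1) hd) as C.
      replace (S (d - 1)) with d in C by lia.
      change (Nc d (S K) 1) with (Nc d K d) in C.
      pose proof (Nc_pos d (S K) (d - 1) hd) as P. replace (S (d - 1)) with d in P by lia.
      pose proof (e_bound (d - 1) ltac:(lia)) as E. replace (S (d - 1)) with d in E by lia.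
      apply le_INR in C. rewrite !mult_INR, !pow_INR in C. rewrite mult_INR.
      apply lt_0_INR in P.
      set (T := INR (Nc d (S K) d)) in *. set (G := INR (Nc d K d)) in *.
      set (a := INR (d - 1) ^ (d - 1)) in *. set (b := INR d ^ (d - 1)) in *.
      assert (Ha : 0 < a) by (apply pow_lt; apply lt_0_INR; lia).
      assert (HG : 0 <= G) by apply pos_INR.
      assert (Hd : 0 <= INR d) by apply pos_INR.
      assert (He : 0 < exp 1) by apply exp_pos.
      assert (HT : T <= exp 1 * (INR d * G)).
      { apply (Rmult_le_reg_l a); auto.
        apply Rle_trans with (b * INR d * G); [lra|].
        replace (a * (exp 1 * (INR d * G))) with ((exp 1 * a) * (INR d * G)) by ring.
        replace (b * INR d * G) with (b * (INR d * G)) by ring.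
        apply Rmult_le_compat_r; [apply Rmult_le_pos; auto|]. exact E. }
      unfold Rdiv. apply (Rmult_le_reg_r T); auto.
      rewrite Rmult_assoc, Rinv_l, Rmult_1_r by lra.
      apply (Rmult_le_reg_l (exp 1)); auto.
      rewrite <- Rmult_assoc, Rinv_r, Rmult_1_l by lra. exact HT.
Qed.
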